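(* Let $\eta^{ij}$ ($1\le i,j\le N$) be a constant nondegenerate symmetric matrix, let $c\neq 0$ be a constant, set $L=N$ and $\mu^{ij}=c\,\eta^{ij}$, and let $\Phi(u^1,\dots,u^N)$ be a function with $\psi_\alpha=\partial\Phi/\partial u^\alpha$, $1\le\alpha\le N$. Then the system $$\sum_{\alpha,\beta=1}^N\mu^{\alpha\beta}\Big(\frac{\partial^2\psi_\alpha}{\partial u^i\partial u^k}\frac{\partial^2\psi_\beta}{\partial u^j\partial u^l}-\frac{\partial^2\psi_\alpha}{\partial u^i\partial u^l}\frac{\partial^2\psi_\beta}{\partial u^j\partial u^k}\Big)=0\quad(\text{all } i,j,k,l)$$ (Gauss equations) and the system $$\sum_{i,j=1}^N\eta^{ij}\Big(\frac{\partial^2\psi_\alpha}{\partial u^i\partial u^k}\frac{\partial^2\psi_\beta}{\partial u^j\partial u^l}-\frac{\partial^2\psi_\alpha}{\partial u^i\partial u^l}\frac{\partial^2\psi_\beta}{\partial u^j\partial u^k}\Big)=0\quad(\text{all } \alpha,\beta,k,l)$$ (Ricci equations) coincide with each other, and both coincide with the associativity equations $$\sum_{i,j=1}^N\eta^{ij}\Big(\frac{\partial^3\Phi}{\partial u^i\partial u^m\partial u^k}\frac{\partial^3\Phi}{\partial u^j\partial u^n\partial u^l}-\frac{\partial^3\Phi}{\partial u^i\partial u^m\partial u^l}\frac{\partial^3\Phi}{\partial u^j\partial u^n\partial u^k}\Big)=0\quad\text{for all } m,n,k,l.$$ *)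

(* Defs.v *)
From HB Require Import structures.
From mathcomp Require Import all_boot all_order all_algebra.
From mathcomp Require Import all_classical all_reals all_analysis.
Set Implicit Arguments. Unset Strict Implicit. Unset Printing Implicit Defensive.
Import Order.TTheory GRing.Theory Num.Theory.
Import numFieldNormedType.Exports.
Local Open Scope ring_scope.
Local Open Scope classical_set_scope.

Definition ebasis {R : realType} {N : nat} (i : 'I_N) : 'rV[R]_N := delta_mx 0 i.

Definition pd {R : realType} {N : nat} (i : 'I_N) (f : 'rV[R]_N -> R) : 'rV[R]_N -> R :=
  fun u => derive f u (ebasis i).

(* iterated partial derivative: iter_pd [:: i1; ...; ik] f = d_i1 ( ... (d_ik f)) *)
Definition iter_pd {R : realType} {N : nat} (s : seq 'I_N) (f : 'rV[R]_N -> R) :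
  'rV[R]_N -> R := foldr (fun i g => pd i g) f s.

Definition Ck_on {R : realType} {N : nat} (k : nat) (U : set 'rV[R]_N)
  (f : 'rV[R]_N -> R) : Prop :=
  forall s : seq 'I_N, forall u, U u ->
    ((size s <= k)%N -> {for u, continuous (iter_pd s f)}) /\
    ((size s < k)%N -> forall i : 'I_N, derivable (iter_pd s f) u (ebasis i)).

(* Main.v *)
Require Import Defs.
From HB Require Import structures.
From mathcomp Require Import all_boot all_order all_algebra.
From mathcomp Require Import all_classical all_reals all_analysis.
From mathcomp Require Import ring lra.
Import Order.TTheory GRing.Theory Num.Theory.
Import numFieldNormedType.Exports.
Local Open Scope ring_scope.
Local Open Scope classical_set_scope.



Section S.
Variables (R : realType) (V : normedModType R).

Lemma line_deriv (f : V -> R) (x v : V) (t : R) :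
  derivable f (x + t *: v) v ->
  is_derive t 1 (fun s => f (x + s *: v)) ('D_v f (x + t *: v)).
Proof.
have E : (fun h : R => h^-1 *: (((fun s => f (x + s *: v)) \o shift t) (h *: 1)
       - (fun s => f (x + s *: v)) t)) =
   (fun h : R => h^-1 *: ((f \o shift (x + t *: v)) (h *: v) - f (x + t *: v))).
  apply/funext => h /=; rewrite [h%:A]mulr1 scalerDl addrCA.
  by [].
move=> d; apply: DeriveDef.
  by rewrite /derivable E.
by rewrite /derive E.
Qed.

Definition Dl (f : V -> R) (u v w : V) (d : R) :=
  f (u + d *: v + d *: w) - f (u + d *: v) - f (u + d *: w) + f u.

Lemma DlC f u v w d : Dl f u v w d = Dl f u w v d.
Proof. rewrite /Dl [u + d *: w + _]addrAC; lra. Qed.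

Lemma rect (f : V -> R) (u v w : V) (d : R) : 0 < d ->
  (forall s t, 0 <= s <= d -> 0 <= t <= d ->
     derivable f (u + s *: v + t *: w) v /\
     derivable ('D_v f) (u + s *: v + t *: w) w) ->
  exists s t, [/\ 0 <= s <= d, 0 <= t <= d &
    Dl f u v w d = d * d * 'D_w ('D_v f) (u + s *: v + t *: w)].
Proof.
move=> d0 H.
pose g := fun s => f ((u + d *: w) + s *: v) - f (u + s *: v).
pose dg := fun s => 'D_v f ((u + d *: w) + s *: v) - 'D_v f (u + s *: v).
have gd : forall s, 0 <= s <= d -> is_derive s 1 g (dg s).
  move=> s hs; rewrite /g /dg; apply: is_deriveB.
    apply: line_deriv; rewrite addrAC; apply: (H s d hs _).1; lra.
  apply: line_deriv; have := (H s 0 hs _).1; rewrite scale0r addr0; apply; lra.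
have [s sI Es] : exists2 s, s \in `]0, d[%R & g d - g 0 = dg s * (d - 0).
  apply: MVT => //.
    move=> x; rewrite in_itv /= => /andP[x0 xd]; apply: gd; lra.
  apply: derivable_within_continuous => x; rewrite in_itv /= => /andP[x0 xd].
  by have [] := gd x ltac:(lra).
move: sI; rewrite in_itv /= => /andP[s0 sd].
pose h := fun t => 'D_v f ((u + s *: v) + t *: w).
have hd : forall t, 0 <= t <= d -> is_derive t 1 h ('D_w ('D_v f) (u + s *: v + t *: w)).
  move=> t ht; apply: line_deriv; apply: (H s t _ ht).2; lra.
have [t tI Et] : exists2 t, t \in `]0, d[%R &
   h d - h 0 = 'D_w ('D_v f) (u + s *: v + t *: w) * (d - 0).
  apply: MVT => //.
    move=> x; rewrite in_itv /= => /andP[x0 xd]; apply: hd; lra.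
  apply: derivable_within_continuous => x; rewrite in_itv /= => /andP[x0 xd].
  by have [] := hd x ltac:(lra).
move: tI; rewrite in_itv /= => /andP[t0 td].
exists s, t; split; try lra.
have -> : Dl f u v w d = g d - g 0.
  by rewrite /g /Dl !scale0r !addr0 [u + d *: w + _]addrAC; lra.
rewrite Es /dg.
have -> : 'D_v f (u + d *: w + s *: v) - 'D_v f (u + s *: v) = h d - h 0.
  by rewrite /h scale0r addr0 [u + d *: w + _]addrAC.
rewrite Et; lra.
Qed.
Lemma closeR_eq (A B : R) :
  (forall e : R, 0 < e -> exists a, `|A - a| < e /\ `|B - a| < e) -> A = B.
Proof.
move=> H; apply/eqP; rewrite -subr_eq0 -normr_eq0; apply/negPn/negP => AB.
have e0 : 0 < `|A - B| / 2 by rewrite divr_gt0 // lt_neqAle normr_ge0 andbT eq_sym.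
have [a [h1 h2]] := H _ e0.
have := ler_distD a A B; rewrite (distrC a B); lra.
Qed.
End S.



Section S.
Variables (R : realType) (V : normedModType R).
Lemma schwarz (f : V -> R) (u v w : V) :
  (\forall y \near u, [/\ derivable f y v, derivable f y w,
      derivable ('D_v f) y w & derivable ('D_w f) y v]) ->
  {for u, continuous ('D_w ('D_v f))} -> {for u, continuous ('D_v ('D_w f))} ->
  'D_w ('D_v f) u = 'D_v ('D_w f) u.
Proof.
move=> Hd c1 c2.
apply: (@closeR_eq R ('D_w ('D_v f) u) ('D_v ('D_w f) u)) => e e0.
have C1 : \forall t \near u, `|'D_w ('D_v f) u - 'D_w ('D_v f) t| < e by apply: (cvgrPdist_lt _ _).1 c1 e e0.
have C2 : \forall t \near u, `|'D_v ('D_w f) u - 'D_v ('D_w f) t| < e by apply: (cvgrPdist_lt _ _).1 c2 e e0.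
have H := @filterI _ _ (nbhs_filter u) _ _ Hd (@filterI _ _ (nbhs_filter u) _ _ C1 C2).
have [r /= r0 Hr] := (nbhs_normP _ _).1 H.
pose K := `|v| + `|w| + 1.
have K0 : 0 < K by rewrite /K; have := normr_ge0 v; have := normr_ge0 w; lra.
pose d := r / (2 * K).
have d0 : 0 < d by rewrite /d divr_gt0 // mulr_gt0.
have dK : d * K < r.
  have -> : d * K = r / 2.
    rewrite /d; field.
    by rewrite gt_eqF.
  lra.
have inB : forall (a b : V) s t, `|a| + `|b| + 1 = K -> 0 <= s <= d -> 0 <= t <= d ->
    ball_ Num.Def.normr u r (u + s *: a + t *: b).
  move=> a b s t hK hs ht; rewrite /= -addrA opprD addrA subrr sub0r normrN.
  apply: (le_lt_trans (ler_normD _ _)); rewrite !normrZ.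
  have := normr_ge0 a; have := normr_ge0 b.
  rewrite (ger0_norm (x := s)); last lra.
  rewrite (ger0_norm (x := t)); last lra.
  move: dK; rewrite -hK; nra.
have [s1 [t1 [hs1 ht1 E1]]] := @rect R V f u v w d d0
  (fun s t hs ht => let: conj (And4 a1 _ a3 _) _ := Hr _ (inB v w s t erefl hs ht) in conj a1 a3).
have [s2 [t2 [hs2 ht2 E2]]] := @rect R V f u w v d d0
  (fun s t hs ht => let: conj (And4 _ a2 _ a4) _ := Hr _ (inB w v s t ltac:(by rewrite /K [`|v| + _]addrC) hs ht) in conj a2 a4).
have E : 'D_w ('D_v f) (u + s1 *: v + t1 *: w) = 'D_v ('D_w f) (u + s2 *: w + t2 *: v).
  apply: (mulfI (x := d * d)); first by rewrite mulf_neq0 ?gt_eqF.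
  by rewrite -E1 -E2 DlC.
exists ('D_w ('D_v f) (u + s1 *: v + t1 *: w)); split.
  by have [_ [h _]] := Hr _ (inB v w s1 t1 erefl hs1 ht1).
rewrite E.
by have [_ [_ h]] := Hr _ (inB w v s2 t2 ltac:(by rewrite /K [`|v| + _]addrC) hs2 ht2).
Qed.
End S.



Lemma gauss_ricci (F : fieldType) N (eta : 'M[F]_N) (c : F)
  (T : 'I_N -> 'I_N -> 'I_N -> F) :
  (forall x y z, T x y z = T z y x) -> forall i j k l,
  \sum_(a < N) \sum_(b < N) (c *: eta) a b *
     (T i k a * T j l b - T i l a * T j k b) =
  c * \sum_(a < N) \sum_(b < N) eta a b *
     (T a k i * T b l j - T a l i * T b k j).
Proof.
move=> HT i j k l; rewrite big_distrr; apply: eq_bigr => a _.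
rewrite big_distrr; apply: eq_bigr => b _.
by rewrite mxE (HT i k a) (HT j l b) (HT i l a) (HT j k b) -mulrA.
Qed.

Lemma ricci_assoc (F : fieldType) N (eta : 'M[F]_N)
  (T : 'I_N -> 'I_N -> 'I_N -> F) : eta^T = eta -> forall a b k l,
  \sum_(i < N) \sum_(j < N) eta i j *
     (T i k a * T j l b - T i l a * T j k b) =
  \sum_(i < N) \sum_(j < N) eta i j *
     (T i k a * T j l b - T i k b * T j l a).
Proof.
move=> He a b k l.
under eq_bigr do under eq_bigr do rewrite mulrBr.
under [RHS]eq_bigr do under eq_bigr do rewrite mulrBr.
under eq_bigr do rewrite sumrB.
under [RHS]eq_bigr do rewrite sumrB.
rewrite !sumrB; congr (_ - _).
rewrite [RHS]exchange_big /=; apply: eq_bigr => i _; apply: eq_bigr => j _.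
by rewrite -{2}He mxE [T j k b * _]mulrC.
Qed.

Lemma alg_main (F : fieldType) N (eta : 'M[F]_N) (c : F)
  (T : 'I_N -> 'I_N -> 'I_N -> F) :
  eta^T = eta -> c != 0 -> (forall x y z, T x y z = T z y x) ->
  ((forall i j k l : 'I_N,
      \sum_(a < N) \sum_(b < N) (c *: eta) a b *
        (T i k a * T j l b - T i l a * T j k b) = 0) <->
   (forall a b k l : 'I_N,
      \sum_(i < N) \sum_(j < N) eta i j *
        (T i k a * T j l b - T i l a * T j k b) = 0)) /\
  ((forall a b k l : 'I_N,
      \sum_(i < N) \sum_(j < N) eta i j *
        (T i k a * T j l b - T i l a * T j k b) = 0) <->
   (forall m n k l : 'I_N,
      \sum_(i < N) \sum_(j < N) eta i j *
        (T i m k * T j n l - T i m l * T j n k) = 0)).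
Proof.
move=> Hs c0 HT.
have G := @gauss_ricci F N eta c T HT.
have RA := @ricci_assoc F N eta T Hs.
split; split.
- move=> HG a b k l; have := HG a b k l; rewrite G => /eqP.
  by rewrite mulf_eq0 (negbTE c0) /= => /eqP.
- by move=> HR i j k l; rewrite G HR mulr0.
- by move=> HR m n k l; rewrite -RA; exact: HR.
- by move=> HA a b k l; rewrite RA; exact: HA.
Qed.

Theorem mainTheorem3 (R : realType) (N : nat) (eta : 'M[R]_N) (c : R)
  (U : set 'rV[R]_N) (Phi : 'rV[R]_N -> R) :
  eta^T = eta -> eta \in unitmx -> c != 0 ->
  open U -> Ck_on 3 U Phi ->
  let mu := c *: eta in
  let psi := fun a : 'I_N => pd a Phi in
  forall u, U u ->
  let Gauss := forall i j k l : 'I_N,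
      \sum_(a < N) \sum_(b < N) mu a b *
        (pd i (pd k (psi a)) u * pd j (pd l (psi b)) u
         - pd i (pd l (psi a)) u * pd j (pd k (psi b)) u) = 0 in
  let Ricci := forall a b k l : 'I_N,
      \sum_(i < N) \sum_(j < N) eta i j *
        (pd i (pd k (psi a)) u * pd j (pd l (psi b)) u
         - pd i (pd l (psi a)) u * pd j (pd k (psi b)) u) = 0 in
  let Assoc := forall m n k l : 'I_N,
      \sum_(i < N) \sum_(j < N) eta i j *
        (pd i (pd m (pd k Phi)) u * pd j (pd n (pd l Phi)) u
         - pd i (pd m (pd l Phi)) u * pd j (pd n (pd k Phi)) u) = 0 in
  (Gauss <-> Ricci) /\ (Ricci <-> Assoc).
Proof.
move=> Hs _ c0 oU HC mu psi u Uu Gauss Ricci Assoc.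
have nU : forall p, U p -> nbhs p U := fun p Up => open_nbhs_nbhs (conj oU Up).
have d0 : forall p, U p -> forall i, derivable Phi p (ebasis i) :=
  fun p Up => (HC [::] p Up).2 erefl.
have d1 : forall p, U p -> forall z i, derivable (pd z Phi) p (ebasis i) :=
  fun p Up z => (HC [:: z] p Up).2 erefl.
have d2 : forall p, U p -> forall y z i, derivable (pd y (pd z Phi)) p (ebasis i) :=
  fun p Up y z => (HC [:: y; z] p Up).2 erefl.
have c2 : forall p, U p -> forall y z, {for p, continuous (pd y (pd z Phi))} :=
  fun p Up y z => (HC [:: y; z] p Up).1 erefl.
have c3 : forall x y z, {for u, continuous (pd x (pd y (pd z Phi)))} :=
  fun x y z => (HC [:: x; y; z] u Uu).1 erefl.
have inner : forall p, U p -> forall y z, pd y (pd z Phi) p = pd z (pd y Phi) p.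
  move=> p Up y z.
  apply: (@schwarz R _ Phi p (ebasis z) (ebasis y)); [|exact: c2|exact: c2].
  apply: (@filterS _ _ (nbhs_filter p) U); last exact: nU.
  move=> q Uq; split; [exact: d0|exact: d0|exact: d1|exact: d1].
pose T := fun x y z => pd x (pd y (pd z Phi)) u.
have T23 : forall x y z, T x y z = T x z y.
  move=> x y z; apply: near_eq_derive.
  apply: (@filterS _ _ (nbhs_filter u) U); last exact: nU.
  by move=> q Uq; apply: inner.
have T12 : forall x y z, T x y z = T y x z.
  move=> x y z.
  apply: (@schwarz R _ (pd z Phi) u (ebasis y) (ebasis x)); [|exact: c3|exact: c3].
  apply: (@filterS _ _ (nbhs_filter u) U); last exact: nU.
  move=> q Uq; split; [exact: d1|exact: d1|exact: d2|exact: d2].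
have HT : forall x y z, T x y z = T z y x.
  by move=> x y z; rewrite T12 T23 T12.
exact: (@alg_main R N eta c T Hs c0 HT).
Qed.
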